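(* Let $k$ be a field and $d\ge 0$ an integer. Let $A_{d+1}=k[a_1,\ldots,a_{d+1},b_1,\ldots,b_{d+1}]$ and $B_d=k[a_1,\ldots,a_d,b_1,\ldots,b_d,c]$, bigraded as in the context, and regard $B_d$ as a bigraded $A_{d+1}$-module via the algebra morphism $f:A_{d+1}\to B_d$ defined in the context. Then there is an exact sequence of bigraded $A_{d+1}$-modules $$0\to t^{-2}v^{2(d+1)}\frac{1-v^{2(d+1)}}{1-v^2}\cdot A_{d+1}\longrightarrow \frac{1-v^{2(d+1)}}{1-v^2}\cdot A_{d+1}\longrightarrow B_d\to 0,$$ where $\frac{1-v^{2(d+1)}}{1-v^2}=1+v^2+\cdots+v^{2d}$.
   Context: For $e\ge 0$, $A_e=k[a_1,\ldots,a_e,b_1,\ldots,b_e]$ is the bigraded polynomial algebra with $\deg(a_i)=(2(e-i+1),0)$ and $\deg(b_i)=(2(e-i+1),-2)$. $B_d=k[a_1,\ldots,a_d,b_1,\ldots,b_d,c]$ is bigraded with $\deg(a_i)=(2(d-i+1),0)$, $\deg(b_i)=(2(d-i+1),-2)$, $\deg(c)=(2,0)$. The morphism of bigraded algebras $f:A_{d+1}\to B_d$ is given by $a_i\mapsto a_{i-1}-ca_i$ and $b_i\mapsto b_{i-1}-cb_i$ for $1\le i\le d+1$, where one sets $a_0=b_0=b_{d+1}=0$ and $a_{d+1}=1$ in $B_d$. Notation: for a bigraded vector space $N=\bigoplus_{i,j}N_{ij}$ with finite-dimensional components, its class is $P=\sum_{i,j}v^it^j\dim N_{ij}$, and for a bigraded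 module $M$, $P\cdot M$ denotes the bigraded module $N\otimes_k M$ (well defined up to isomorphism); e.g. $v^it^j\cdot M$ is $M$ with bigrading shifted so that a copy of $k$ in degree $(i,j)$ is tensored on. *)

(* Defs.v *)
From HB Require Import structures.
From mathcomp Require Import all_boot all_order all_algebra.
From mathcomp Require Import mpoly.
Set Implicit Arguments. Unset Strict Implicit. Unset Printing Implicit Defensive.
Import Order.TTheory GRing.Theory Num.Theory.
Local Open Scope ring_scope.

Section Defs.
Variable k : fieldType.

(* A_e = k[a_1..a_e, b_1..b_e]: variable index lshift e j is a_(j+1),
   rshift e j is b_(j+1), for j : 'I_e (0-based). *)
Definition Aalg (e : nat) := {mpoly k[e + e]}.

Definition degA (e : nat) (i : 'I_(e + e)) : int * int :=
  match split i with
  | inl j => (Posz (2 * (e - j))%N, 0)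
  | inr j => (Posz (2 * (e - j))%N, -2)
  end.

(* B_d = k[a_1..a_d, b_1..b_d, c]: indices are those of A_d (widened),
   and the last index ord_max is c. *)
Definition Balg (d : nat) := {mpoly k[(d + d).+1]}.

Definition degB (d : nat) (i : 'I_((d + d).+1)) : int * int :=
  match unlift ord_max i with
  | Some j => degA j
  | None => (2, 0)
  end.

Definition Bidx_a (d : nat) (j : 'I_d) : 'I_((d + d).+1) :=
  widen_ord (leqnSn _) (lshift d j).
Definition Bidx_b (d : nat) (j : 'I_d) : 'I_((d + d).+1) :=
  widen_ord (leqnSn _) (rshift d j).

Definition Bc (d : nat) : Balg d := 'X_(ord_max).

(* a_n in B_d for 1 <= n <= d, with a_0 = 0 and a_(d+1) = 1 *)
Definition aB (d n : nat) : Balg d :=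
  if n == 0%N then 0 else if n == d.+1 then 1 else
  match (insub n.-1 : option 'I_d) with
  | Some j => 'X_(Bidx_a j) | None => 0 end.

(* b_n in B_d for 1 <= n <= d, with b_0 = 0 and b_(d+1) = 0 *)
Definition bB (d n : nat) : Balg d :=
  if n == 0%N then 0 else if n == d.+1 then 0 else
  match (insub n.-1 : option 'I_d) with
  | Some j => 'X_(Bidx_b j) | None => 0 end.

Definition fvar (d : nat) (i : 'I_(d.+1 + d.+1)) : Balg d :=
  match split i with
  | inl j => aB d j - Bc d * aB d j.+1
  | inr j => bB d j - Bc d * bB d j.+1
  end.

Definition fmor (d : nat) (p : Aalg d.+1) : Balg d :=
  comp_mpoly [tuple @fvar d i | i < d.+1 + d.+1] p.

Definition mbideg (n : nat) (deg : 'I_n -> int * int) (m : 'X_{1..n}) : int * int :=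
  (\sum_(i < n) (m i)%:Z * (deg i).1, \sum_(i < n) (m i)%:Z * (deg i).2).

(* p is bihomogeneous of bidegree pq (0 is homogeneous of every bidegree) *)
Definition bihomog (n : nat) (deg : 'I_n -> int * int) (pq : int * int)
    (p : {mpoly k[n]}) : Prop :=
  forall m, m \in msupp p -> mbideg deg m = pq.

(* The bigraded free module P . A_e with P = sum_i v^(g i).1 t^(g i).2 is
   modelled as row vectors 'rV[A_e]_r, the i-th basis vector sitting in
   bidegree g i. *)
Definition free_homog (e r : nat) (g : 'I_r -> int * int) (pq : int * int)
    (x : 'rV[Aalg e]_r) : Prop :=
  forall i : 'I_r, bihomog (@degA e) (pq.1 - (g i).1, pq.2 - (g i).2) (x 0 i).

(* generator bidegrees of (1 + v^2 + ... + v^(2d)) . A_(d+1) *)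
Definition gen0 (d : nat) (i : 'I_d.+1) : int * int := (Posz (2 * i)%N, 0).
(* generator bidegrees of t^(-2) v^(2(d+1)) (1 + v^2 + ... + v^(2d)) . A_(d+1) *)
Definition gen1 (d : nat) (i : 'I_d.+1) : int * int :=
  (Posz (2 * d.+1 + 2 * i)%N, -2).

End Defs.

(* Main.v *)
Require Import Defs.
From HB Require Import structures.
From mathcomp Require Import all_boot all_order all_algebra.
From mathcomp Require Import mpoly.
From mathcomp Require Import zify ring.
Set Implicit Arguments. Unset Strict Implicit. Unset Printing Implicit Defensive.
Import Order.TTheory GRing.Theory Num.Theory.
Local Open Scope ring_scope.
Section Gen.
Variable k : fieldType.

Lemma mpoly_gen_ind n (Pr : {mpoly k[n]} -> Prop) :
  (forall c, Pr c%:MP) -> (forall i, Pr 'X_i) ->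
  (forall p q, Pr p -> Pr q -> Pr (p + q)) ->
  (forall p q, Pr p -> Pr q -> Pr (p * q)) -> forall p, Pr p.
Proof.
move=> hC hX hD hM; have h1 : Pr 1 by rewrite -mpolyC1.
move=> p0; elim/mpolyind: p0 => [|c m p _ _ IH]; first by rewrite -mpolyC0.
apply: (hD _ _ _ IH); rewrite -mul_mpolyC; apply: (hM _ _ (hC c)).
rewrite mpolyXE_id; apply: (big_ind Pr) => //.
move=> i _; elim: (m i) => [|e IHe]; first by rewrite expr0.
by rewrite exprS; apply: (hM _ _ (hX i)).
Qed.

Section Hom.
Variable n : nat.
Variable deg : 'I_n -> int * int.
Local Notation bh := (@bihomog k n deg).

Lemma mbidegD (m1 m2 : 'X_{1..n}) : mbideg deg (m1 + m2)%MM =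
  ((mbideg deg m1).1 + (mbideg deg m2).1, (mbideg deg m1).2 + (mbideg deg m2).2).
Proof.
rewrite /mbideg /=; congr pair; rewrite -big_split /=; apply: eq_bigr => i _;
  by rewrite mnmDE PoszD mulrDl.
Qed.

Lemma mbideg0 : mbideg deg 0%MM = (0, 0).
Proof. by rewrite /mbideg; congr pair; apply: big1 => i _; rewrite mnm0E mul0r. Qed.

Lemma mbideg1 i : mbideg deg U_(i)%MM = deg i.
Proof.
rewrite /mbideg [RHS]surjective_pairing.
congr pair; rewrite (bigD1 i) //= big1 ?addr0 ?mnm1E ?eqxx ?mul1r // => j /negbTE nj;
 by rewrite mnm1E eq_sym nj mul0r.
Qed.

Lemma bh0 pq : bh pq 0.
Proof. by move=> m; rewrite -mpolyC0 msupp0. Qed.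

Lemma bhD pq p q : bh pq p -> bh pq q -> bh pq (p + q).
Proof. by move=> hp hq m /msuppD_le; rewrite mem_cat => /orP[/hp|/hq]. Qed.

Lemma bhN pq p : bh pq p -> bh pq (- p).
Proof. by move=> hp m; rewrite (perm_mem (msuppN p)) => /hp. Qed.

Lemma bhB pq p q : bh pq p -> bh pq q -> bh pq (p - q).
Proof. by move=> hp hq; apply: bhD => //; apply: bhN. Qed.

Lemma bhZ pq c p : bh pq p -> bh pq (c *: p).
Proof. by move=> hp m /msuppZ_le /hp. Qed.

Lemma bhC c : bh (0, 0) c%:MP.
Proof. by move=> m; rewrite msuppC; case: eqP => // _; rewrite inE => /eqP ->; apply: mbideg0. Qed.

Lemma bhX i : bh (deg i) 'X_i.
Proof. by move=> m; rewrite msuppX inE => /eqP ->; apply: mbideg1. Qed.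

Lemma bhM u1 v1 u2 v2 p q : bh (u1, v1) p -> bh (u2, v2) q -> bh (u1 + u2, v1 + v2) (p * q).
Proof.
move=> hp hq m /msuppM_le /allpairsP [[m1 m2] [/= /hp h1 /hq h2 ->]].
by rewrite mbidegD h1 h2.
Qed.

Lemma bh_eq pq pq' p : pq = pq' -> bh pq p -> bh pq' p.
Proof. by move=> ->. Qed.

Lemma bh_sum (T : Type) (r : seq T) (P : pred T) (F : T -> {mpoly k[n]}) pq :
  (forall x, P x -> bh pq (F x)) -> bh pq (\sum_(x <- r | P x) F x).
Proof. move=> h; elim/big_rec: _ => [|x y Px hy]; [exact: bh0 | exact: bhD (h x Px) hy]. Qed.

Lemma bh_sum_seq (T : eqType) (r : seq T) (F : T -> {mpoly k[n]}) pq :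
  (forall x, x \in r -> bh pq (F x)) -> bh pq (\sum_(x <- r) F x).
Proof. by move=> h; rewrite big_seq_cond; apply: bh_sum => x /andP[/h]. Qed.

Lemma bhXn u v p (e : nat) : bh (u, v) p -> bh (e%:Z * u, e%:Z * v) (p ^+ e).
Proof.
move=> hp; elim: e => [|e IH]; first by rewrite expr0 -mpolyC1 !mul0r; apply: bhC.
by rewrite exprS; apply: bh_eq (bhM hp IH); rewrite intS !mulrDl !mul1r.
Qed.
Lemma bh_prod (I : Type) (r : seq I) (P : pred I) (F : I -> {mpoly k[n]}) u v :
  (forall i, P i -> bh (u i, v i) (F i)) ->
  bh (\sum_(i <- r | P i) u i, \sum_(i <- r | P i) v i) (\prod_(i <- r | P i) F i).
Proof.
move=> h; apply: (big_rec3 (fun x y z => bh (y, z) x)) => [|i x y z Pi hx].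
  by rewrite -mpolyC1; apply: bhC.
exact: bhM (h i Pi) hx.
Qed.
End Hom.

Lemma bh_comp n1 n2 (deg1 : 'I_n1 -> int * int) (deg2 : 'I_n2 -> int * int)
   (t : n1.-tuple {mpoly k[n2]}) p pq :
 (forall i, bihomog deg2 (deg1 i) (tnth t i)) -> bihomog deg1 pq p ->
 bihomog deg2 pq (comp_mpoly t p).
Proof.
move=> ht hp; rewrite comp_mpolyE; apply: bh_sum_seq => m /hp <-.
apply: bhZ; rewrite /mbideg; apply: bh_prod => i _.
have := ht i; rewrite [deg1 i]surjective_pairing => h; exact: bhXn h.
Qed.
End Gen.
Section Main.
Variable k : fieldType.
Variable d : nat.
Local Notation n := d.+1.
Local Notation R := (Aalg k d.+1).
Local Notation B := (Balg k d).
Local Notation c := (Bc k d).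
Local Notation aB := (aB k d).
Local Notation bB := (bB k d).
Local Notation fvar := (@fvar k d).

Lemma split_l m1 m2 (j : 'I_m1) : split (lshift m2 j) = inl j.
Proof. exact: (unsplitK (inl _ j)). Qed.
Lemma split_r m1 m2 (j : 'I_m2) : split (rshift m1 j) = inr j.
Proof. exact: (unsplitK (inr _ j)). Qed.

Definition an (i : nat) : R := 'X_(lshift n (@inord d i)).
Definition bn (i : nat) : R := 'X_(rshift n (@inord d i)).
Definition PP : {poly R} := 'X^n + \poly_(i < n) an i.
Definition QQ : {poly R} := \poly_(i < n) bn i.

Lemma coefPP j : PP`_j = (j == n)%:R + (if (j < n)%N then an j else 0).
Proof. by rewrite /PP coefD coefXn coef_poly. Qed.

Lemma sizePPl : (size (\poly_(i < n) an i) < size ('X^n : {poly R}))%N.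
Proof. by rewrite size_polyXn ltnS size_poly. Qed.

Lemma size_PP : size PP = n.+1.
Proof. by rewrite /PP size_addl ?sizePPl // size_polyXn. Qed.

Lemma monic_PP : PP \is monic.
Proof. by rewrite monicE /PP lead_coefDl ?sizePPl // lead_coefXn. Qed.

Lemma PP_uniq (E : {poly R}) : (size (E * PP)%R <= n)%N -> E = 0.
Proof.
have [->//|nz] := eqVneq E 0.
rewrite size_Mmonic ?monic_PP // size_PP addnS /= => h.
move: nz; rewrite -size_poly_eq0; move: h; case: (size E) => //= s.
by rewrite addSn ltnNge leq_addl.
Qed.

Definition toP (x : 'rV[R]_n) : {poly R} := \poly_(i < n) x 0 (@inord d i).
Definition fromP (p : {poly R}) : 'rV[R]_n := \row_(i < n) p`_i.

Lemma size_toP x : (size (toP x) <= n)%N.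
Proof. exact: size_poly. Qed.

Lemma toP_fromP (p : {poly R}) : (size p <= n)%N -> toP (fromP p) = p.
Proof.
move=> hp; apply/polyP => i; rewrite coef_poly mxE.
case: ltnP => hi; first by rewrite inordK.
by apply/esym/(leq_sizeP _ _ hp).
Qed.

Lemma fromP_toP x : fromP (toP x) = x.
Proof.
by apply/rowP => i; rewrite mxE coef_poly ltn_ord inord_val.
Qed.

Fixpoint red (m : nat) (p : {poly R}) : {poly R} :=
  match m with
  | 0 => p
  | m'.+1 => red m' (p - p`_(n + m') *: ('X^m' * PP))
  end.

Lemma red0 m : red m 0 = 0.
Proof. by elim: m => //= m IH; rewrite coef0 scale0r subr0. Qed.

Lemma redD m p q : red m (p + q) = red m p + red m q.
Proof.
elim: m p q => //= m IH p q; rewrite -IH; congr (red m _).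
by rewrite coefD scalerDl opprD addrACA.
Qed.

Lemma redZ m (a : R) p : red m (a *: p) = a *: red m p.
Proof.
elim: m p => //= m IH p; rewrite -IH; congr (red m _).
by rewrite coefZ scalerBr scalerA.
Qed.

Lemma red_sum m (I : Type) (r : seq I) (P : pred I) (F : I -> {poly R}) :
  red m (\sum_(i <- r | P i) F i) = \sum_(i <- r | P i) red m (F i).
Proof. exact: (big_morph (red m) (redD m) (red0 m)). Qed.

Lemma red_small m (p : {poly R}) : (size p <= n)%N -> red m p = p.
Proof.
move=> hp; elim: m => //= m IH.
by rewrite (leq_sizeP _ _ hp) ?leq_addr // scale0r subr0.
Qed.

Lemma red_size m (p : {poly R}) : (size p <= n + m)%N -> (size (red m p) <= n)%N.
Proof.
elim: m p => [|m IH] p hp /=; first by rewrite addn0 in hp.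
apply: IH; apply/leq_sizeP => j hj.
rewrite coefB coefZ coefXnM ltnNge (leq_trans (leq_addl _ _) hj) /= coefPP.
have [->|ne] := eqVneq j (n + m).
  by rewrite addnK eqxx ltnn addr0 mulr1 subrr.
have hj' : (n + m.+1 <= j)%N by rewrite addnS ltn_neqAle eq_sym ne hj.
rewrite (leq_sizeP _ _ hp) // ifF; last by apply/negbTE; lia.
have -> : ((j - m)%N == n) = false by apply/negbTE; lia.
by rewrite /= addr0 mulr0 subr0.
Qed.

Lemma red_mod m p : exists D, red m p = p - D * PP.
Proof.
elim: m p => [|m IH] p /=; first by exists 0; rewrite mul0r subr0.
have [D ->] := IH (p - p`_(n + m) *: ('X^m * PP)).
exists (D + p`_(n + m) *: 'X^m).
by rewrite mulrDl -scalerAl opprD addrA addrAC.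
Qed.
Definition ftup := [tuple fvar i | i < n + n].
Local Notation fm := (comp_mpoly ftup).
Lemma fmorE p : fmor p = fm p. Proof. by []. Qed.

Fact FF_key : unit. Proof. exact: tt. Qed.
Definition FF : {poly R} -> B := locked_with FF_key (fun p : {poly R} => (map_poly fm p).[c]).
Lemma FFE p : FF p = (map_poly fm p).[c]. Proof. by rewrite /FF locked_withE. Qed.

Lemma FF_D p q : FF (p + q) = FF p + FF q.
Proof. by rewrite !FFE rmorphD hornerD. Qed.
Lemma FF_B p q : FF (p - q) = FF p - FF q.
Proof. by rewrite !FFE rmorphB hornerD hornerN. Qed.
Lemma FF_M p q : FF (p * q) = FF p * FF q.
Proof. by rewrite !FFE rmorphM hornerM. Qed.
Lemma FF_C r : FF r%:P = fm r.
Proof. by rewrite !FFE map_polyC hornerC. Qed.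
Lemma FF_X : FF 'X = c.
Proof. by rewrite !FFE map_polyX hornerX. Qed.
Lemma FF_Xn j : FF 'X^j = c ^+ j.
Proof. by rewrite !FFE map_polyXn hornerXn. Qed.
Lemma FF_0 : FF 0 = 0.
Proof. by rewrite !FFE rmorph0 horner0. Qed.
Lemma FF_1 : FF 1 = 1.
Proof. by rewrite !FFE rmorph1 hornerC. Qed.

Lemma FF_poly m (E : nat -> R) :
  FF (\poly_(i < m) E i) = \sum_(i < m) fm (E i) * c ^+ i.
Proof.
rewrite !FFE poly_def rmorph_sum horner_sum; apply: eq_bigr => i _.
by rewrite /= map_polyZ hornerZ map_polyXn hornerXn.
Qed.


Lemma fm_var i : fm 'X_i = fvar i.
Proof. by rewrite comp_mpolyXU -(tnth_nth 0) tnth_mktuple. Qed.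

Lemma fm_an (i : nat) : (i < n)%N -> fm (an i) = aB i - c * aB i.+1.
Proof. by move=> hi; rewrite /an fm_var /fvar split_l /= inordK. Qed.

Lemma fm_bn (i : nat) : (i < n)%N -> fm (bn i) = bB i - c * bB i.+1.
Proof. by move=> hi; rewrite /bn fm_var /fvar split_r /= inordK. Qed.

Lemma aB0 : aB 0 = 0. Proof. by []. Qed.
Lemma aBn : aB n = 1. Proof. by rewrite /aB eqxx. Qed.
Lemma bB0 : bB 0 = 0. Proof. by []. Qed.
Lemma bBn : bB n = 0. Proof. by rewrite /bB eqxx. Qed.

Lemma tele (f : nat -> B) : \sum_(i < n) (f i - f i.+1) = f 0%N - f n.
Proof.
have := telescope_sumr f (leq0n n); rewrite big_mkord => h.
by rewrite -[LHS]opprK -sumrN; under eq_bigr do rewrite opprB; rewrite h opprB.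
Qed.

Lemma FF_PP : FF PP = 0.
Proof.
rewrite /PP FF_D FF_Xn FF_poly.
rewrite (eq_bigr (fun i : 'I_n => aB i * c ^+ i - aB i.+1 * c ^+ i.+1)).
  by rewrite (tele (fun i => aB i * c ^+ i)) aB0 aBn mul0r mul1r sub0r addrN.
by move=> i _; rewrite fm_an // mulrBl exprS mulrCA mulrA.
Qed.

Lemma FF_QQ : FF QQ = 0.
Proof.
rewrite /QQ FF_poly.
rewrite (eq_bigr (fun i : 'I_n => bB i * c ^+ i - bB i.+1 * c ^+ i.+1)).
  by rewrite (tele (fun i => bB i * c ^+ i)) bB0 bBn !mul0r subrr.
by move=> i _; rewrite fm_bn // mulrBl exprS mulrCA mulrA.
Qed.
Definition pc (kk : nat) : R := if kk == n then 1 else an kk.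
Definition Af (j : nat) : {poly R} := \sum_(j <= kk < n.+1) pc kk *: 'X^(kk - j).
Definition Bf (j : nat) : {poly R} := \sum_(j <= kk < n) bn kk *: 'X^(kk - j).

Lemma shiftX (F : nat -> R) i m : (i < m)%N ->
  \sum_(i.+1 <= kk < m) F kk *: 'X^(kk - i) = 'X * \sum_(i.+1 <= kk < m) F kk *: 'X^(kk - i.+1).
Proof.
move=> _; rewrite mulr_sumr; apply: eq_big_nat => kk /andP[h1 _].
by rewrite -scalerAr -exprS subnSK.
Qed.

Lemma Af_rec i : (i < n)%N -> Af i = (an i)%:P + 'X * Af i.+1.
Proof.
move=> hi; have hi' : (i < n.+1)%N by apply: leqW.
rewrite /Af (big_ltn hi') subnn expr0 /pc (ltn_eqF hi) alg_polyC.
by rewrite shiftX.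
Qed.

Lemma Af_n : Af n = 1.
Proof. by rewrite /Af big_nat1 /pc eqxx subnn expr0 scale1r. Qed.

Lemma Af_0 : Af 0 = PP.
Proof.
rewrite /Af big_nat_recr //= /pc eqxx subn0 scale1r /PP addrC poly_def; congr (_ + _).
rewrite big_mkord; apply: eq_bigr => i _; by rewrite ifF ?subn0 // ltn_eqF.
Qed.

Lemma Bf_rec i : (i < n)%N -> Bf i = (bn i)%:P + 'X * Bf i.+1.
Proof.
move=> hi; rewrite /Bf (big_ltn hi) subnn expr0.
by rewrite alg_polyC shiftX.
Qed.

Lemma Bf_n : Bf n = 0.
Proof. by rewrite /Bf big_geq. Qed.

Lemma Bf_0 : Bf 0 = QQ.
Proof.
rewrite /Bf /QQ poly_def big_mkord; apply: eq_bigr => i _; by rewrite subn0.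
Qed.

Definition gpsi (i : 'I_((d + d).+1)) : {poly R} :=
  match unlift ord_max i with
  | None => 'X
  | Some j => match split j with inl jj => Af jj.+1 | inr jj => Bf jj.+1 end
  end.

Fact psi_key : unit. Proof. exact: tt. Qed.
Definition psi : B -> {poly R} := locked_with psi_key (mmap (polyC \o @mpolyC (n + n) k) gpsi).
Lemma psiE b : psi b = mmap (polyC \o @mpolyC (n + n) k) gpsi b. Proof. by rewrite /psi locked_withE. Qed.

Lemma psiD x y : psi (x + y) = psi x + psi y. Proof. rewrite !psiE; exact: rmorphD. Qed.
Lemma psiB x y : psi (x - y) = psi x - psi y. Proof. rewrite !psiE; exact: rmorphB. Qed.
Lemma psiM x y : psi (x * y) = psi x * psi y. Proof. rewrite !psiE; exact: rmorphM. Qed.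
Lemma psi0 : psi 0 = 0. Proof. rewrite !psiE; exact: rmorph0. Qed.
Lemma psi1 : psi 1 = 1. Proof. rewrite !psiE; exact: rmorph1. Qed.

Lemma psi_C c0 : psi c0%:MP = (c0%:MP)%:P.
Proof. by rewrite psiE mmapC. Qed.

Lemma psi_X i : psi 'X_i = gpsi i.
Proof. by rewrite psiE mmapX mmap1U. Qed.


Lemma Bidx_aE (jj : 'I_d) : Bidx_a jj = lift ord_max (lshift d jj).
Proof. by apply/val_inj; rewrite /= /bump; have := ltn_ord jj; case: leqP; lia. Qed.
Lemma Bidx_bE (jj : 'I_d) : Bidx_b jj = lift ord_max (rshift d jj).
Proof. by apply/val_inj; rewrite /= /bump; have := ltn_ord jj; case: leqP; lia. Qed.

Lemma gpsi_a jj : gpsi (Bidx_a jj) = Af jj.+1.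
Proof. by rewrite /gpsi Bidx_aE liftK split_l. Qed.
Lemma gpsi_b jj : gpsi (Bidx_b jj) = Bf jj.+1.
Proof. by rewrite /gpsi Bidx_bE liftK split_r. Qed.
Lemma gpsi_c : gpsi ord_max = 'X.
Proof. by rewrite /gpsi unlift_none. Qed.

Lemma aB_X (jj : 'I_d) : aB jj.+1 = 'X_(Bidx_a jj).
Proof. by rewrite /Defs.aB /= ifF ?valK // eqSS ltn_eqF. Qed.
Lemma bB_X (jj : 'I_d) : bB jj.+1 = 'X_(Bidx_b jj).
Proof. by rewrite /Defs.bB /= ifF ?valK // eqSS ltn_eqF. Qed.

Lemma aB_cases j : (0 < j < n)%N -> exists jj : 'I_d, j = jj.+1.
Proof.
case: j => // j /andP[_ hj]; exists (Ordinal (hj : (j < d)%N)); by [].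
Qed.

Lemma psi_aB j : (j <= n)%N -> psi (aB j) = if j == 0%N then 0 else Af j.
Proof.
move=> hj; case: eqP => [->|nz]; first by rewrite aB0 psi0.
have [->|ne] := eqVneq j n; first by rewrite aBn psi1 Af_n.
have [jj ->] : exists jj : 'I_d, j = jj.+1.
  apply: aB_cases; apply/andP; split; [by rewrite lt0n; apply/eqP | by rewrite ltn_neqAle ne hj].
by rewrite aB_X psi_X gpsi_a.
Qed.

Lemma psi_bB j : (j <= n)%N -> psi (bB j) = if j == 0%N then 0 else Bf j.
Proof.
move=> hj; case: eqP => [->|nz]; first by rewrite bB0 psi0.
have [->|ne] := eqVneq j n; first by rewrite bBn psi0 Bf_n.
have [jj ->] : exists jj : 'I_d, j = jj.+1.
  apply: aB_cases; apply/andP; split; [by rewrite lt0n; apply/eqP | by rewrite ltn_neqAle ne hj].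
by rewrite bB_X psi_X gpsi_b.
Qed.

Lemma psi_c : psi c = 'X.
Proof. by rewrite /Bc psi_X gpsi_c. Qed.
Definition inI (z : {poly R}) := exists u v : {poly R}, z = u * PP + v * QQ.
Lemma inI0 : inI 0. Proof. by exists 0, 0; rewrite !mul0r addr0. Qed.
Lemma inID z w : inI z -> inI w -> inI (z + w).
Proof. by move=> [u1 [v1 ->]] [u2 [v2 ->]]; exists (u1 + u2), (v1 + v2); ring. Qed.
Lemma inIM w z : inI z -> inI (w * z).
Proof. by move=> [u [v ->]]; exists (w * u), (w * v); ring. Qed.
Lemma inIPP : inI PP. Proof. by exists 1, 0; ring. Qed.
Lemma inIQQ : inI QQ. Proof. by exists 0, 1; ring. Qed.

Definition Sg z := inI (z - psi (FF z)).

Lemma Sg_D z w : Sg z -> Sg w -> Sg (z + w).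
Proof.
rewrite /Sg FF_D psiD => h1 h2.
have e : forall x y a b : {poly R}, x + y - (a + b) = (x - a) + (y - b) by move=> *; ring.
rewrite e.
exact: inID.
Qed.

Lemma Sg_M z w : Sg z -> Sg w -> Sg (z * w).
Proof.
rewrite /Sg FF_M psiM => h1 h2.
have e : forall x y a b : {poly R}, x * y - a * b = x * (y - b) + b * (x - a) by move=> *; ring.
rewrite e.
by apply: inID; apply: inIM.
Qed.

Lemma Sg_X : Sg 'X.
Proof. by rewrite /Sg FF_X psi_c subrr; exact: inI0. Qed.

Lemma Sg_an j : (j < n)%N -> Sg (an j)%:P.
Proof.
move=> hj; rewrite /Sg FF_C fm_an // psiB psiM psi_c psi_aB ?(ltnW hj) // psi_aB //=.
case: eqP => [->|nz].
  by rewrite sub0r opprK -(Af_rec (ltn0Sn d)) Af_0; exact: inIPP.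
by rewrite (Af_rec hj) addrK subrr; exact: inI0.
Qed.

Lemma Sg_bn j : (j < n)%N -> Sg (bn j)%:P.
Proof.
move=> hj; rewrite /Sg FF_C fm_bn // psiB psiM psi_c psi_bB ?(ltnW hj) // psi_bB //=.
case: eqP => [->|nz].
  by rewrite sub0r opprK -(Bf_rec (ltn0Sn d)) Bf_0; exact: inIQQ.
by rewrite (Bf_rec hj) addrK subrr; exact: inI0.
Qed.

Lemma Sg_C r : Sg r%:P.
Proof.
elim/mpoly_gen_ind: r => [c0|i|p q hp hq|p q hp hq].
- by rewrite /Sg FF_C comp_mpolyC psi_C subrr; exact: inI0.
- case: (splitP i) => j hj.
    have -> : i = lshift n j by apply: val_inj.
    by have := Sg_an (ltn_ord j); rewrite /an inord_val.
  have -> : i = rshift n j by apply: val_inj.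
  by have := Sg_bn (ltn_ord j); rewrite /bn inord_val.
- by rewrite polyCD; apply: Sg_D.
- by rewrite polyCM; apply: Sg_M.
Qed.

Lemma SgE z : Sg z -> inI (z - psi (FF z)). Proof. by []. Qed.
Lemma Sg0 : Sg 0.
Proof. by rewrite /Sg FF_0 psi0 subrr; exact: inI0. Qed.
Opaque Sg.
Lemma G_cong z : Sg z.
Proof.
elim/poly_ind: z => [|p c0 IH].
  exact: Sg0.
exact: (Sg_D (Sg_M IH Sg_X) (Sg_C c0)).
Qed.

Lemma FF_Af i : (i <= n)%N -> FF (Af i) = aB i.
Proof.
move=> hi; rewrite -(subKn hi); elim: (n - i)%N (leq_subr i n) => [|m IH] hm.
  by rewrite subn0 Af_n FF_1 aBn.
have hl : (n - m.+1 < n)%N by rewrite subnS prednK ?subn_gt0 // leq_subr.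
rewrite (Af_rec hl) FF_D FF_M FF_C FF_X fm_an // -subSn // subSS IH ?(ltnW hm) //.
by rewrite subrK.
Qed.

Lemma FF_Bf i : (i <= n)%N -> FF (Bf i) = bB i.
Proof.
move=> hi; rewrite -(subKn hi); elim: (n - i)%N (leq_subr i n) => [|m IH] hm.
  by rewrite subn0 Bf_n FF_0 bBn.
have hl : (n - m.+1 < n)%N by rewrite subnS prednK ?subn_gt0 // leq_subr.
rewrite (Bf_rec hl) FF_D FF_M FF_C FF_X fm_bn // -subSn // subSS IH ?(ltnW hm) //.
by rewrite subrK.
Qed.

Lemma FFpsi b : FF (psi b) = b.
Proof.
elim/mpoly_gen_ind: b => [c0|i|p q hp hq|p q hp hq].
- by rewrite psi_C FF_C comp_mpolyC.
- rewrite psi_X; case: (unliftP ord_max i) => [j ->|->]; last by rewrite gpsi_c FF_X.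
  case: (splitP j) => jj hjj.
    have -> : lift ord_max j = Bidx_a jj by rewrite Bidx_aE; congr lift; apply: val_inj.
    by rewrite gpsi_a FF_Af; [exact: aB_X | exact: ltnW (ltn_ord jj)].
  have -> : lift ord_max j = Bidx_b jj by rewrite Bidx_bE; congr lift; apply: val_inj.
  by rewrite gpsi_b FF_Bf; [exact: bB_X | exact: ltnW (ltn_ord jj)].
- by rewrite psiD FF_D hp hq.
- by rewrite psiM FF_M hp hq.
Qed.

Definition beta (x : 'rV[R]_n) : B := FF (toP x).
Definition alpha (x : 'rV[R]_n) : 'rV[R]_n := fromP (red n (toP x * QQ)).

Lemma toP_lin (a : R) x y : toP (a *: x + y) = a *: toP x + toP y.
Proof. by apply/polyP => i; rewrite coefD coefZ !coef_poly; case: ifP; rewrite ?mxE ?mulr0 ?addr0. Qed.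

Lemma fromP_lin (a : R) p q : fromP (a *: p + q) = a *: fromP p + fromP q.
Proof. by apply/rowP => i; rewrite !mxE coefD coefZ. Qed.

Lemma beta_lin (a : R) x y : beta (a *: x + y) = fmor a * beta x + beta y.
Proof. by rewrite /beta toP_lin -mul_polyC FF_D FF_M FF_C. Qed.

Lemma alpha_lin (a : R) x y : alpha (a *: x + y) = a *: alpha x + alpha y.
Proof. by rewrite /alpha toP_lin mulrDl -scalerAl redD redZ fromP_lin. Qed.

Lemma size_red_n x : (size (red n (toP x * QQ)) <= n)%N.
Proof.
apply: red_size; apply: leq_trans (size_mul_leq _ _) _.
have h1 := size_toP x; have h2 : (size QQ <= n)%N by exact: size_poly.
lia.
Qed.

Lemma beta_alpha x : beta (alpha x) = 0.
Proof.
rewrite /beta /alpha toP_fromP ?size_red_n //.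
have [D ->] := red_mod n (toP x * QQ).
by rewrite FF_B !FF_M FF_PP FF_QQ !mulr0 subr0.
Qed.

Lemma exact_mid y : beta y = 0 -> exists x, alpha x = y.
Proof.
move=> hy; have [u [v e]] := SgE (G_cong (toP y)).
move: e; rewrite -/(beta y) hy psi0 subr0 => e.
have [D hD] := red_mod (size v) v.
have hw : (size (red (size v) v) <= n)%N by apply: red_size; rewrite leq_addl.
set w := red (size v) v in hD hw.
have [D' hD'] := red_mod n (w * QQ).
exists (fromP w); rewrite /alpha toP_fromP //.
have hv : v = w + D * PP by rewrite hD subrK.
have hsz : (size (red n (w * QQ)) <= n)%N.
  by have := size_red_n (fromP w); rewrite toP_fromP.
have h : toP y - red n (w * QQ) = (u + D * QQ + D') * PP.
  rewrite hD' e hv.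
  have ee : forall u w D D' P Q : {poly R},
    u * P + (w + D * P) * Q - (w * Q - D' * P) = (u + D * Q + D') * P by move=> *; ring.
  exact: ee.
have h0 : u + D * QQ + D' = 0.
  apply: PP_uniq; rewrite -h; apply: leq_trans (size_add _ _) _.
  by rewrite size_opp geq_max size_toP hsz.
by move: h; rewrite h0 mul0r => /eqP; rewrite subr_eq0 => /eqP <-; rewrite fromP_toP.
Qed.

Lemma beta_surj b : exists y, beta y = b.
Proof.
have [D hD] := red_mod (size (psi b)) (psi b).
have hw : (size (red (size (psi b)) (psi b)) <= n)%N by apply: red_size; rewrite leq_addl.
exists (fromP (red (size (psi b)) (psi b))).
by rewrite /beta toP_fromP // hD FF_B FF_M FF_PP mulr0 subr0 FFpsi.
Qed.

Definition phiv (i : 'I_(n + n)) : R :=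
  match split i with inl _ => 'X_i | inr j => ((j : nat) == 0%N)%:R end.
Definition phit := [tuple phiv i | i < n + n].
Local Notation phi := (comp_mpoly phit).

Lemma phi_an i : (i < n)%N -> phi (an i) = an i.
Proof. by move=> hi; rewrite comp_mpolyXU -(tnth_nth 0) tnth_mktuple /phiv split_l. Qed.
Lemma phi_bn i : (i < n)%N -> phi (bn i) = (i == 0%N)%:R.
Proof. by move=> hi; rewrite comp_mpolyXU -(tnth_nth 0) tnth_mktuple /phiv split_r /= inordK. Qed.

Lemma map_PP : map_poly phi PP = PP.
Proof.
rewrite /PP rmorphD /= map_polyXn; congr (_ + _); apply/polyP => j.
by rewrite coef_map /= !coef_poly; case: ifP => hj; [exact: phi_an | exact: raddf0].
Qed.

Lemma map_QQ : map_poly phi QQ = 1.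
Proof.
apply/polyP => j; rewrite coef_map /= coef_poly coef1; case: ifP => hj; first by rewrite phi_bn.
by rewrite raddf0; case: j hj.
Qed.

Lemma red_map m p : map_poly phi (red m p) = red m (map_poly phi p).
Proof.
elim: m p => //= m IH p; rewrite IH; congr (red m _).
by rewrite rmorphB /= map_polyZ rmorphM /= map_polyXn map_PP coef_map.
Qed.

Definition Mx : 'M[R]_n := \matrix_(j < n, i < n) (red n ('X^j * QQ))`_i.

Lemma alpha_mx x : alpha x = x *m Mx.
Proof.
apply/rowP => i; rewrite /alpha /toP poly_def mulr_suml red_sum !mxE coef_sum.
apply: eq_bigr => j _; rewrite -scalerAl redZ coefZ inord_val !mxE //.
Qed.

Lemma map_Mx : map_mx phi Mx = 1%:M.
Proof.
have hX : forall j : nat, map_poly phi ('X^j * QQ) = 'X^j.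
  by move=> j; rewrite rmorphM /= map_polyXn map_QQ mulr1.
apply/matrixP => j i; rewrite !mxE -(coef_map phi) red_map hX.
by rewrite red_small ?size_polyXn // coefXn eq_sym.
Qed.

Lemma det_Mx : \det Mx != 0.
Proof.
have h : phi (\det Mx) = 1 by rewrite -det_map_mx map_Mx det1.
by apply/eqP => h0; move: h; rewrite h0 rmorph0 => /eqP; rewrite eq_sym oner_eq0.
Qed.

Lemma alpha_inj : injective alpha.
Proof.
move=> x1 x2; rewrite !alpha_mx => h.
have h2 : (x1 - x2) *m Mx = 0 by rewrite mulmxBl h subrr.
have h3 : (x1 - x2) *m (Mx *m \adj Mx) = 0 by rewrite mulmxA h2 mul0mx.
move: h3; rewrite mul_mx_adj mul_mx_scalar => h3.
apply/eqP; rewrite -subr_eq0; apply/eqP/rowP => i.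
have := congr1 (fun A : 'rV[R]_n => A 0 i) h3; rewrite !mxE => /eqP.
by rewrite mulf_eq0 (negbTE det_Mx) /= => /eqP.
Qed.

Local Notation homA := (@bihomog k (n + n) (@degA n)).
Local Notation homB := (@bihomog k (d + d).+1 (@degB d)).

Lemma degB_c : @degB d ord_max = (2, 0).
Proof. by rewrite /degB unlift_none. Qed.
Lemma degB_a (jj : 'I_d) : @degB d (Bidx_a jj) = (Posz (2 * (d - jj))%N, 0).
Proof. by rewrite /degB Bidx_aE liftK /degA split_l. Qed.
Lemma degB_b (jj : 'I_d) : @degB d (Bidx_b jj) = (Posz (2 * (d - jj))%N, -2).
Proof. by rewrite /degB Bidx_bE liftK /degA split_r. Qed.

Lemma bh_aB j : (j <= n)%N -> homB (Posz (2 * (n - j))%N, 0) (aB j).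
Proof.
move=> hj; have [->|nz] := eqVneq j 0%N; first by rewrite aB0; apply: bh0.
have [->|ne] := eqVneq j n; first by rewrite aBn subnn muln0 -mpolyC1; apply: bhC.
have [jj ->] : exists jj : 'I_d, j = jj.+1.
  apply: aB_cases; apply/andP; split; [by rewrite lt0n | by rewrite ltn_neqAle ne hj].
by rewrite aB_X subSS -degB_a; apply: bhX.
Qed.

Lemma bh_bB j : (j <= n)%N -> homB (Posz (2 * (n - j))%N, -2) (bB j).
Proof.
move=> hj; have [->|nz] := eqVneq j 0%N; first by rewrite bB0; apply: bh0.
have [->|ne] := eqVneq j n; first by rewrite bBn; apply: bh0.
have [jj ->] : exists jj : 'I_d, j = jj.+1.
  apply: aB_cases; apply/andP; split; [by rewrite lt0n | by rewrite ltn_neqAle ne hj].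
by rewrite bB_X subSS -degB_b; apply: bhX.
Qed.

Lemma bh_c : homB (2, 0) c.
Proof. by rewrite -degB_c; apply: bhX. Qed.

Lemma bh_fvar i : homB (degA i) (fvar i).
Proof.
case: (splitP i) => j hj.
  have -> : i = lshift n j by apply: val_inj.
  rewrite /Defs.fvar /degA !split_l; apply: bhB.
    exact: bh_aB (ltnW (ltn_ord j)).
  apply: bh_eq (bhM bh_c (bh_aB (ltn_ord j))).
  have hj2 := ltn_ord j; congr pair; lia.
have -> : i = rshift n j by apply: val_inj.
rewrite /Defs.fvar /degA !split_r; apply: bhB.
  exact: bh_bB (ltnW (ltn_ord j)).
apply: bh_eq (bhM bh_c (bh_bB (ltn_ord j))).
have hj2 := ltn_ord j; congr pair; lia.
Qed.

Lemma bh_fm p pq : homA pq p -> homB pq (fm p).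
Proof. apply: bh_comp => i; rewrite tnth_mktuple; exact: bh_fvar. Qed.

Lemma beta_homog pq x : free_homog (@gen0 d) pq x -> homB pq (beta x).
Proof.
case: pq => u v h; rewrite /beta /toP FF_poly; apply: bh_sum => i _.
rewrite inord_val; have h1 := bh_fm (h i); have h2 := bhXn (e:=i) bh_c.
rewrite /gen0 /= in h1; apply: bh_eq (bhM h1 h2); congr pair; lia.
Qed.

Definition phom (u v : int) (p : {poly R}) :=
  forall i : nat, homA (u - Posz (2 * i)%N, v) p`_i.

Lemma phom_eq u v u' v' p : u = u' -> v = v' -> phom u v p -> phom u' v' p.
Proof. by move=> -> ->. Qed.

Lemma phom_B u v p q : phom u v p -> phom u v q -> phom u v (p - q).
Proof. by move=> hp hq i; rewrite coefB; apply: bhB. Qed.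

Lemma phom_D u v p q : phom u v p -> phom u v q -> phom u v (p + q).
Proof. by move=> hp hq i; rewrite coefD; apply: bhD. Qed.

Lemma phom_M u1 v1 u2 v2 p q : phom u1 v1 p -> phom u2 v2 q -> phom (u1 + u2) (v1 + v2) (p * q).
Proof.
move=> hp hq i; rewrite coefM; apply: bh_sum => j _.
apply: bh_eq (bhM (hp j) (hq (i - j)%N)); have hj := ltn_ord j; congr pair; lia.
Qed.

Lemma phom_Xn j : phom (Posz (2 * j)%N) 0 'X^j.
Proof.
move=> i; rewrite coefXn; case: eqP => [->|_]; last exact: bh0.
by rewrite subrr -mpolyC1; apply: bhC.
Qed.

Lemma phom_C u v a : homA (u, v) a -> phom u v a%:P.
Proof. by move=> h i; rewrite coefC; case: eqP => [->|_]; [rewrite muln0 subr0 | apply: bh0]. Qed.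

Lemma phom_poly m (E : nat -> R) u v :
  (forall i, (i < m)%N -> homA (u - Posz (2 * i)%N, v) (E i)) -> phom u v (\poly_(i < m) E i).
Proof. by move=> h i; rewrite coef_poly; case: ifP => hi; [apply: h | apply: bh0]. Qed.

Lemma homA_an j : (j < n)%N -> homA (Posz (2 * (n - j))%N, 0) (an j).
Proof. move=> hj; have := @bhX k (n + n) (@degA n) (lshift n (inord j)); apply: bh_eq. by rewrite /degA split_l /= inordK. Qed.
Lemma homA_bn j : (j < n)%N -> homA (Posz (2 * (n - j))%N, -2) (bn j).
Proof. move=> hj; have := @bhX k (n + n) (@degA n) (rshift n (inord j)); apply: bh_eq. by rewrite /degA split_r /= inordK. Qed.

Lemma phom_PP : phom (Posz (2 * n)%N) 0 PP.
Proof.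
rewrite /PP; apply: phom_D; first exact: phom_Xn.
apply: phom_poly => i hi; apply: bh_eq (homA_an hi); congr pair; lia.
Qed.

Lemma phom_QQ : phom (Posz (2 * n)%N) (-2) QQ.
Proof. apply: phom_poly => i hi; apply: bh_eq (homA_bn hi); congr pair; lia. Qed.

Lemma phom_red m u v p : phom u v p -> phom u v (red m p).
Proof.
elim: m p => //= m IH p hp; apply: IH; apply: phom_B => //.
rewrite -mul_polyC; apply: (phom_eq _ _ (phom_M (phom_C (hp (n + m)%N)) (phom_M (@phom_Xn m) phom_PP))).
  lia.
by rewrite !addr0.
Qed.

Lemma phom_toP pq x : free_homog (@gen1 d) pq x -> phom (pq.1 - Posz (2 * n)%N) (pq.2 + 2) (toP x).
Proof.
case: pq => u v h; apply: phom_poly => i hi.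
have := h (inord i); rewrite /gen1 /= inordK //; apply: bh_eq; congr pair; lia.
Qed.

Lemma free_fromP u v p : phom u v p -> free_homog (@gen0 d) (u, v) (fromP p).
Proof. by move=> h i; rewrite mxE /gen0 /= subr0; apply: h. Qed.

Lemma alpha_homog pq x : free_homog (@gen1 d) pq x -> free_homog (@gen0 d) pq (alpha x).
Proof.
case: pq => u v h; apply: free_fromP; apply: phom_red.
apply: (phom_eq _ _ (phom_M (phom_toP h) phom_QQ)); rewrite /=; lia.
Qed.

End Main.

Unset Implicit Arguments.

Theorem mainTheorem1 (k : fieldType) (d : nat) :
  exists (alpha : 'rV[Aalg k d.+1]_d.+1 -> 'rV[Aalg k d.+1]_d.+1)
         (beta : 'rV[Aalg k d.+1]_d.+1 -> Balg k d),
    (forall (a : Aalg k d.+1) x y, alpha (a *: x + y) = a *: alpha x + alpha y) /\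
    (forall pq x, free_homog (@gen1 d) pq x -> free_homog (@gen0 d) pq (alpha x)) /\
    (forall (a : Aalg k d.+1) x y,
        beta (a *: x + y) = fmor a * beta x + beta y) /\
    (forall pq x, free_homog (@gen0 d) pq x -> bihomog (@degB d) pq (beta x)) /\
    injective alpha /\
    (forall y, beta y = 0 <-> exists x, alpha x = y) /\
    (forall b : Balg k d, exists y, beta y = b).
Proof.
exists (@alpha k d), (@beta k d).
split; first exact: alpha_lin.
split; first exact: alpha_homog.
split; first exact: beta_lin.
split; first exact: beta_homog.
split; first exact: alpha_inj.
split; last exact: beta_surj.
move=> y; split; first exact: exact_mid.
by move=> [x <-]; apply: beta_alpha.
Qed.
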